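(* Let $n\geq k\geq 4$ with $k\equiv 0\pmod 4$, and let $c\geq1$. Then there exists a diagonal $\mathrm{MS}^0_\Gamma(n,n;k,k;c)$ for every abelian group $\Gamma\in\mathcal G$ of order $nkc$.
   Context: Let $(\Gamma,+)$ be an abelian group. A partially filled array is an array in which some cells may be empty. A zero-sum magic partially filled array set $\mathrm{MS}^0_\Gamma(n,n;k,k;c)$ is a set of $c$ partially filled $n\times n$ arrays with entries in $\Gamma$ such that every element of $\Gamma$ appears exactly once in exactly one of the arrays, every array has exactly $k$ filled cells in each row and each column, and in every array the entries of each row and each column sum to $0_\Gamma$. For an $n\times n$ partially filled array, cell $(i,j)$ belongs to the diagonal $D_r$ if $j-i\equiv r\pmod n$; the array is $k$-diagonal if its nonempty cells are exactly those of $k$ consecutive diagonals (indices mod $n$); the set is diagonal if every member is $k$-diagonal. $\mathcal G$ is the set of all finite abelian groups that either have odd order or contain more than one element of order $2$. *)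

(* Defs.v *)
From HB Require Import structures.
From mathcomp Require Import all_boot all_order all_algebra.
Set Implicit Arguments. Unset Strict Implicit. Unset Printing Implicit Defensive.
Import GRing.Theory.
Local Open Scope ring_scope.

(* A partially filled n x n array over G: cell (i,j) is None if empty,
   Some g if it contains g. *)
Definition pfarray (G : Type) (n : nat) := 'I_n -> 'I_n -> option G.

Definition entry (G : zmodType) n (A : pfarray G n) i j : G := odflt 0 (A i j).

Definition order2_elems (G : finZmodType) : {set G} :=
  [set x : G | (x != 0) && (x + x == 0)].

Definition in_classG (G : finZmodType) : Prop :=
  odd #|G| \/ (1 < #|order2_elems G|)%N.

(* cell (i,j) belongs to diagonal D_r iff j - i = r (mod n) *)
Definition on_diag n (r : nat) (i j : 'I_n) : bool :=
  ((j + (n - i)) %% n == r %% n)%N.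

Definition k_diagonal (G : Type) n (k : nat) (A : pfarray G n) : Prop :=
  exists r : 'I_n, forall i j : 'I_n,
    (isSome (A i j) : bool) = [exists s : 'I_k, on_diag (r + s)%N i j].

Definition zero_sum_MS (G : finZmodType) n k c (A : 'I_c -> pfarray G n) : Prop :=
  [/\
      forall g : G,
        #|[set t : 'I_c * ('I_n * 'I_n) | A t.1 t.2.1 t.2.2 == Some g]| = 1%N,
      forall a i, #|[set j | isSome (A a i j)]| = k,
      forall a j, #|[set i | isSome (A a i j)]| = k,
      forall a i, \sum_(j < n) entry (A a) i j = 0
    & forall a j, \sum_(i < n) entry (A a) i j = 0].

Definition diagonal_MS (G : finZmodType) n k c (A : 'I_c -> pfarray G n) : Prop :=
  zero_sum_MS k A /\ forall a, k_diagonal k (A a).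

(* Main.v *)
Require Import Defs.
From mathcomp Require Import all_boot all_order all_algebra.
From HB Require Import structures.
From mathcomp Require Import all_boot all_order all_algebra zify.
Set Implicit Arguments. Unset Strict Implicit. Unset Printing Implicit Defensive.
Import GRing.Theory.
Local Open Scope ring_scope.

Lemma inv2_add (G : zmodType) (v : G) : v + v = 0 -> - v = v.
Proof. by move=> h; apply/eqP; rewrite eq_sym -subr_eq0 opprK h. Qed.

Lemma double_small (G : finZmodType) (e f : G) :
  e != 0 -> f != 0 -> e != f -> e + e = 0 -> f + f = 0 ->
  (#|[set (x + x)%R | x : G]| * 4 <= #|G|)%N.
Proof.
move=> e0 f0 ef ee ff.
set D := [set x + x | x : G].
pose V := [set x | x \in [:: 0; e; f; e + f]].
pose h (y : G) := odflt 0 [pick x | x + x == y].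
have hD y : y \in D -> h y + h y = y.
  case/imsetP=> x _ ->; rewrite /h; case: pickP => [z /eqP //|/(_ x)]; by rewrite eqxx.
have V2 v : v \in V -> v + v = 0.
  rewrite inE !inE => /or4P [] /eqP ->; rewrite ?addr0 //.
  by rewrite addrACA ee ff addr0.
have cV : #|V| = 4%N.
  rewrite /V cardsE; apply/card_uniqP; rewrite /=.
  rewrite !inE !negb_or.
  have efn : e + f != 0 by rewrite addr_eq0 (inv2_add ff).
  have h1 : e != e + f by rewrite -{1}(addr0 e) (inj_eq (addrI e)) eq_sym.
  have h2 : f != e + f by rewrite -{1}(add0r f) (inj_eq (addIr f)) eq_sym.
  by rewrite !(eq_sym 0) e0 f0 efn ef h1 h2.
pose F (p : G * G) := h p.1 + p.2.
have Finj : {in setX D V &, injective F}.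
  move=> [y1 v1] [y2 v2]; rewrite !in_setX /= => /andP [y1D v1V] /andP [y2D v2V].
  rewrite /F /= => E.
  have E2 : (h y1 + v1) + (h y1 + v1) = (h y2 + v2) + (h y2 + v2) by rewrite E.
  rewrite addrACA [in RHS]addrACA (V2 _ v1V) (V2 _ v2V) !addr0 (hD _ y1D) (hD _ y2D) in E2.
  by rewrite E2 in E *; move/addrI: E => ->.
have := max_card [set F p | p in setX D V].
by rewrite card_in_imset // cardsX cV.
Qed.
Definition good (G : finZmodType) (t C : G) (S : {set G}) : bool :=
  [&& 0 \in S, [forall x in S, forall y in S, x - y \in S],
      [forall x, x + x \in S] & [&& t \notin S, C \notin S & t + C \notin S]].

Lemma goodP (G : finZmodType) (t C : G) (S : {set G}) :
  reflect [/\ 0 \in S, (forall x y, x \in S -> y \in S -> x - y \in S),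
             (forall x, x + x \in S) & [/\ t \notin S, C \notin S & t + C \notin S]]
          (good t C S).
Proof.
apply: (iffP and4P) => [[h0 /forallP h1 /forallP h2 /and3P [h3 h4 h5]]|[h0 h1 h2 [h3 h4 h5]]];
  split => //; try by apply/and3P.
- move=> x y xS yS; move: (h1 x); rewrite xS /= => /forallP/(_ y).
  by rewrite yS.
- by apply/forallP => x; apply/implyP => xS; apply/forallP => y; apply/implyP => yS; apply: h1.
- by apply/forallP.
Qed.

Lemma good_extend (G : finZmodType) (t C : G) (S : {set G}) g :
  good t C S -> g \notin S -> t - g \notin S -> C - g \notin S -> g + t + C \notin S ->
  good t C (S :|: [set g + s | s in S]).
Proof.
move=> /goodP [h0 h1 h2 [h3 h4 h5]] g1 g2 g3 g4.
have hN x : x \in S -> - x \in S by move=> xS; rewrite -sub0r h1.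
have hD x y : x \in S -> y \in S -> x + y \in S.
  by move=> xS yS; rewrite -[y]opprK h1 // hN.
have gg := h2 g.
have memG x : (x \in [set g + s | s in S]) = (x - g \in S).
  apply/imsetP/idP => [[s sS ->]|xS]; first by rewrite addrC addKr.
  by exists (x - g) => //; rewrite addrC subrK.
apply/goodP; split; [| | | split].
- by rewrite inE h0.
- move=> x y; rewrite !inE !memG.
  case/orP=> xS; case/orP=> yS; apply/orP.
  + by left; apply: h1.
  + right; have -> : x - y - g = (x - (y - g)) - (g + g).
      by rewrite opprB opprD !addrA (addrAC (x + g - y)) (addrAC x g) addrK.
    by apply: (h1) => //; apply: (h1).
  + by right; rewrite addrAC h1.
  + left; have -> : x - y = (x - g) - (y - g) by rewrite opprB addrA subrK.
    by apply: h1.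
- by move=> x; rewrite inE h2.
- rewrite !inE memG negb_or h3 /=; exact: g2.
- rewrite !inE memG negb_or h4 /=; exact: g3.
- rewrite !inE memG negb_or h5 /=.
  apply: contra g4 => H.
  have -> : g + t + C = (t + C - g) + (g + g) by rewrite addrA subrK addrC addrA.
  by apply: hD.
Qed.

Lemma exists_S (G : finZmodType) (e f : G) :
  e != 0 -> f != 0 -> e != f -> e + e = 0 -> f + f = 0 ->
  exists t C (S : {set G}), good t C S /\
    forall g, [|| g \in S, t - g \in S, C - g \in S | g + t + C \in S].
Proof.
move=> e0 f0 ef ee ff.
have hc := double_small e0 f0 ef ee ff.
set D := [set x + x | x : G] in hc.
have D0 : 0 \in D by apply/imsetP; exists 0 => //; rewrite addr0.
have Dpos : (0 < #|D|)%N by apply/card_gt0P; exists 0.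
have [t tD] : exists t, t \notin D.
  case: (pickP (fun t => t \notin D)) => [t tD|H]; first by exists t.
  have : D = setT by apply/setP => x; rewrite in_setT; apply/negbFE; exact: H x.
  move=> DT; have cD : #|D| = #|G| by rewrite DT cardsT.
  exfalso; move: hc Dpos; rewrite cD; lia.
set D2 := D :|: [set t + x | x in D].
have [C CD] : exists C, C \notin D2.
  case: (pickP (fun C => C \notin D2)) => [C CD|H]; first by exists C.
  have : D2 = setT by apply/setP => x; rewrite in_setT; apply/negbFE; exact: H x.
  move=> DT.
  have : (#|D2| <= #|D| + #|D|)%N.
    by rewrite /D2 (leq_trans (leq_card_setU _ _)) // leq_add2l leq_imset_card.
  have cD : #|D2| = #|G| by rewrite DT cardsT.
  rewrite cD => h2.
  move: hc h2 Dpos; lia.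
exists t, C, [arg max_(S > D | good t C S) #|S|].
case: arg_maxnP => [|S gS maxS].
  apply/goodP; split => //.
  - move=> x y /imsetP [x1 _ ->] /imsetP [y1 _ ->]; apply/imsetP; exists (x1 - y1) => //.
    by rewrite opprD !addrA (addrAC x1 x1) (addrAC (x1 - y1)).
  - by move=> x; apply/imsetP; exists x.
  split => //.
  - by apply: contra CD => h; rewrite inE h.
  apply: contra CD => /imsetP [x _ h]; rewrite inE; apply/orP; right.
  apply/imsetP; exists ((x - t) + (x - t)); first by apply/imsetP; exists (x - t).
  by rewrite addrACA -h -opprD !addrA (addrC (t + t)) addrK.
split => // g; apply/negPn/negP; rewrite !negb_or => /and4P [g1 g2 g3 g4].
have gS' := good_extend gS g1 g2 g3 g4.
have := maxS _ gS'.
have : S \proper S :|: [set g + s | s in S].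
  apply: properUl; apply/subsetPn; exists g; last by [].
  apply/imsetP; exists 0; last by rewrite addr0.
  by case/goodP: gS.
by move/proper_card; rewrite ltnNge => /negP.
Qed.

Definition Fs (G : zmodType) (t C p : G) (s : nat) : G :=
  match s with 0 => p | 1 => t - p | 2 => C - p | _ => p - t - C end.

Definition rep (G : zmodType) (t C : G) (s : nat) : G :=
  match s with 0 => 0 | 1 => t | 2 => C | _ => t + C end.

Lemma Fs_inj (G : finZmodType) (t C : G) (S : {set G}) p q s s' :
  good t C S -> p \in S -> q \in S -> (s < 4)%N -> (s' < 4)%N ->
  Fs t C p s = Fs t C q s' -> s = s' /\ p = q.
Proof.
move=> /goodP [h0 h1 h2 [h3 h4 h5]] pS qS s4 s'4 E.
have hN x : x \in S -> - x \in S by move=> xS; rewrite -sub0r h1.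
have hD x y : x \in S -> y \in S -> x + y \in S.
  by move=> xS yS; rewrite -[y]opprK h1 // hN.
have cls r p0 : p0 \in S -> (r < 4)%N -> Fs t C p0 r - rep t C r \in S.
  move=> p0S; case: r => [|[|[|[|r]]]] // _ /=.
  - by rewrite subr0.
  - by rewrite addrAC subrr sub0r hN.
  - by rewrite addrAC subrr sub0r hN.
  - by rewrite -[p0 - t - C]addrA -opprD -addrA -opprD h1.
have tr x y z : x - y \in S -> y - z \in S -> x - z \in S.
  by move=> a b; have := hD _ _ a b; rewrite addrA subrK.
have sy x y : x - y \in S -> y - x \in S by move=> a; rewrite -opprB hN.
have same : rep t C s - rep t C s' \in S.
  apply: (tr _ (Fs t C p s)); first exact/sy/cls.
  by rewrite E; apply: cls.
have ss : s = s'.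
  have htC : t - C \notin S.
    apply: contra h5 => H; have := hD _ _ H (h2 C); by rewrite addrA subrK.
  have htC' : t - (t + C) \notin S by rewrite opprD addrA subrr sub0r; apply: contra h4 => /hN; rewrite opprK.
  have hCt : C - (t + C) \notin S by rewrite opprD addrCA subrr addr0; apply: contra h3 => /hN; rewrite opprK.
  have n0 x : x \notin S -> 0 - x \notin S by move=> H; apply: contra H => /hN; rewrite sub0r opprK.
  have n0' x : x \notin S -> x - 0 \notin S by rewrite subr0.
  move: same; clear E; case: s s4 => [|[|[|[|?]]]] // _; case: s' s'4 => [|[|[|[|?]]]] // _ /=;
   rewrite ?subrr ?h0 //; move=> H; exfalso; move: H; apply/negP;
   by [apply: n0 | apply: n0' | apply: htC' | apply: hCt | apply: htC
      | rewrite -opprB; apply: contra htC => /hN; rewrite opprK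
      | rewrite -opprB; apply: contra htC' => /hN; rewrite opprK
      | rewrite -opprB; apply: contra hCt => /hN; rewrite opprK].
split => //; subst s'; clear s'4 same; move: E.
case: s s4 => [|[|[|[|?]]]] // _ /=.
- by move/addrI/oppr_inj.
- by move/addrI/oppr_inj.
- by move/addIr/addIr.
Qed.

Lemma mixed_inj (m N a b x a' b' x' : nat) : (0 < N)%N -> (b < m)%N -> (b' < m)%N ->
  (x < N)%N -> (x' < N)%N ->
  (a * (m * N) + b * N + x = a' * (m * N) + b' * N + x')%N -> [/\ a = a', b = b' & x = x'].
Proof.
move=> N0 bm b'm xN x'N.
have e1 y z w : (y * (m * N) + z * N + w = (y * m + z) * N + w)%N.
  by rewrite mulnDl mulnA.
rewrite !e1 => E.
have ex : x = x'.
  by move: (congr1 (modn^~ N) E); rewrite !modnMDl !modn_small.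
have E2 : (a * m + b = a' * m + b')%N.
  by move: (congr1 (divn^~ N) E); rewrite !divnMDl // !divn_small // !addn0.
have m0 : (0 < m)%N by apply: leq_ltn_trans bm.
have eb : b = b'.
  by move: (congr1 (modn^~ m) E2); rewrite !modnMDl !modn_small.
split => //.
by move: (congr1 (divn^~ m) E2); rewrite !divnMDl // !divn_small // !addn0.
Qed.

Lemma idx_lt (c m N a b x : nat) : (a < c)%N -> (b < m)%N -> (x < N)%N ->
  (a * (m * N) + b * N + x < c * (m * N))%N.
Proof.
move=> ac bm xN.
have h1 : (b * N + x < m * N)%N.
  apply: (@leq_trans (b.+1 * N)); first by rewrite mulSn [(N + _)%N]addnC ltn_add2l.
  by rewrite leq_mul2r bm orbT.
apply: (@leq_trans (a.+1 * (m * N))); first by rewrite mulSn [(m * N + _)%N]addnC -addnA ltn_add2l.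
by rewrite leq_mul2r ac orbT.
Qed.

Lemma mixed_surj (c m N ix : nat) : (0 < N)%N -> (0 < m)%N -> (ix < c * (m * N))%N ->
  exists a b x, [/\ (a < c)%N, (b < m)%N, (x < N)%N & ix = a * (m * N) + b * N + x]%N.
Proof.
move=> N0 m0 ixc.
have mN0 : (0 < m * N)%N by rewrite muln_gt0 m0.
exists (ix %/ (m * N))%N, ((ix %% (m * N)) %/ N)%N, (ix %% N)%N; split.
- by rewrite ltn_divLR.
- by rewrite ltn_divLR // ltn_pmod.
- by rewrite ltn_pmod.
- rewrite {1}(divn_eq ix (m * N)) -addnA; congr (_ + _)%N.
  rewrite {1}(divn_eq (ix %% (m * N)) N); congr (_ + _)%N.
  by rewrite modn_dvdm // dvdn_mull.
Qed.

Lemma card_lt_ord (N k : nat) : (k <= N)%N -> #|[set d : 'I_N | (d < k)%N]| = k.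
Proof.
move=> kN.
have -> : [set d : 'I_N | (d < k)%N] = [set widen_ord kN x | x : 'I_k].
  apply/setP => d; rewrite !inE; apply/idP/imsetP => [dk|[x _ ->]]; last by rewrite /= ltn_ord.
  by exists (Ordinal dk) => //; apply/val_inj.
rewrite card_imset; last by move=> x y /(congr1 val) /= /val_inj.
by rewrite card_ord.
Qed.

Lemma sum4 (R : nmodType) (m : nat) (F : nat -> R) :
  \sum_(0 <= d < m * 4) F d =
  \sum_(0 <= b < m) (F (b * 4)%N + F (b * 4 + 1)%N + F (b * 4 + 2)%N + F (b * 4 + 3)%N).
Proof.
elim: m => [|m IH]; first by rewrite !big_geq.
rewrite [in RHS]big_nat_recr // -IH mulSnr !addnS addn0.
rewrite big_nat_recr // big_nat_recr // big_nat_recr // big_nat_recr //=.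
by rewrite !addrA.

Qed.


Lemma card_S (G : finZmodType) (t C : G) (S : {set G}) : good t C S ->
  (forall g, [|| g \in S, t - g \in S, C - g \in S | g + t + C \in S]) ->
  (#|S| * 4 = #|G|)%N.
Proof.
move=> gS cov.
pose F (x : G * 'I_4) := Fs t C x.1 x.2.
have inj : {in setX S setT &, injective F}.
  move=> [p s] [q s']; rewrite !in_setX /= => /andP [pS _] /andP [qS _].
  rewrite /F /= => E; have [h1 h2] := Fs_inj gS pS qS (ltn_ord s) (ltn_ord s') E.
  by rewrite h2; congr pair; apply/val_inj.
have im : F @: setX S setT = setT.
  apply/setP => g; rewrite inE; apply/imsetP.
  case/or4P: (cov g) => h.
  - by exists (g, (0 : 'I_4)); rewrite ?in_setX ?h ?in_setT.
  - by exists (t - g, (1 : 'I_4)); rewrite ?in_setX ?h ?in_setT // /F /= opprB addrC subrK.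
  - by exists (C - g, (2 : 'I_4)); rewrite ?in_setX ?h ?in_setT // /F /= opprB addrC subrK.
  - by exists (g + t + C, (3 : 'I_4)); rewrite ?in_setX ?h ?in_setT // /F /= (addrAC g t C) !addrK.
have := card_in_imset inj; rewrite im cardsT cardsX cardsT card_ord => <-.
by [].
Qed.


Lemma blk1 (G : zmodType) (t C p q : G) : p + (t - q) + (C - p) + (q - t - C) = 0.
Proof.
rewrite (addrC p) -(addrA (t - q)) (addrCA p) subrr addr0.
by apply/eqP; rewrite addr_eq0 opprB opprB addrC.
Qed.
Lemma blk0 (G : zmodType) (t C p q : G) : p + (t - p) + (C - q) + (q - t - C) = 0.
Proof.
by rewrite (addrC p) subrK; apply/eqP; rewrite addr_eq0 opprB opprB addrCA.
Qed.

Definition pp (G : zmodType) (es : seq G) (m N : nat) (a b : nat) (x : 'I_N) : G :=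
  nth 0 es (a * (m * N) + b * N + x)%N.

Definition Vv (G : zmodType) (t C : G) (es : seq G) (m n' : nat) (a b : nat)
  (x : 'I_n'.+2) (s : nat) : G :=
  Fs t C (pp es m a b (x + (odd s)%:R)) s.

Definition Arr (G : zmodType) (t C : G) (es : seq G) (m n' c : nat)
  (a : 'I_c) (i j : 'I_n'.+2) : option G :=
  let d := nat_of_ord (j - i)%R in
  if (d < m * 4)%N then Some (Vv t C es m a (d %/ 4) i (d %% 4)) else None.

Lemma natr_ord (n' : nat) (d : 'I_n'.+2) : (nat_of_ord d)%:R = d.
Proof. by rewrite Zp_nat valZpK. Qed.

Lemma Arr_some (G : zmodType) (t C : G) es m n' c (a : 'I_c) (i j : 'I_n'.+2) :
  isSome (Arr t C es m a i j) = (nat_of_ord (j - i)%R < m * 4)%N.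
Proof. by rewrite /Arr; case: ifP. Qed.

Lemma row_card (G : zmodType) (t C : G) es m n' c (a : 'I_c) (i : 'I_n'.+2) :
  (m * 4 <= n'.+2)%N -> #|[set j | isSome (Arr t C es m a i j)]| = (m * 4)%N.
Proof.
move=> kn.
have -> : [set j | isSome (Arr t C es m a i j)] = [set i + d | d in [set d : 'I_n'.+2 | (d < m * 4)%N]].
  apply/setP => j; rewrite inE Arr_some; apply/idP/imsetP => [h|[d]].
    by exists (j - i); rewrite ?inE // addrC subrK.
  by rewrite inE => dk ->; rewrite (addrC i) addrK.
by rewrite card_imset ?card_lt_ord //; apply: addrI.
Qed.

Lemma col_card (G : zmodType) (t C : G) es m n' c (a : 'I_c) (j : 'I_n'.+2) :
  (m * 4 <= n'.+2)%N -> #|[set i | isSome (Arr t C es m a i j)]| = (m * 4)%N.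
Proof.
move=> kn.
have -> : [set i | isSome (Arr t C es m a i j)] = [set j - d | d in [set d : 'I_n'.+2 | (d < m * 4)%N]].
  apply/setP => i; rewrite inE Arr_some; apply/idP/imsetP => [h|[d]].
    by exists (j - i); rewrite ?inE // opprB addrC subrK.
  by rewrite inE => dk ->; rewrite opprB addrC subrK.
by rewrite card_imset ?card_lt_ord // => x y /addrI /oppr_inj.
Qed.

Lemma row_sum (G : zmodType) (t C : G) es m n' c (a : 'I_c) (i : 'I_n'.+2) :
  (m * 4 <= n'.+2)%N -> \sum_(j < n'.+2) entry (Arr t C es m a) i j = 0.
Proof.
move=> kn.
rewrite (reindex_inj (addrI i)) /=.
pose Gf (d : nat) := if (d < m * 4)%N then Vv t C es m a (d %/ 4) i (d %% 4) else 0.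
rewrite (eq_bigr (fun d : 'I_n'.+2 => Gf d)); last first.
  by move=> d _; rewrite /entry /Arr (addrC i) addrK /Gf; case: ifP.
rewrite -(big_mkord xpredT Gf) (big_cat_nat (leq0n (m * 4)) kn) /=.
rewrite [X in _ + X]big_nat_cond [X in _ + X]big1 ?addr0; last first.
  by move=> d /andP [/andP [kd _] _]; rewrite /Gf ltnNge kd.
rewrite sum4 big_nat_cond big1 // => b /andP [/andP [_ bm] _].
rewrite /Gf.
have h0 : (b * 4 < m * 4)%N by lia.
have h1 : (b * 4 + 1 < m * 4)%N by lia.
have h2 : (b * 4 + 2 < m * 4)%N by lia.
have h3 : (b * 4 + 3 < m * 4)%N by lia.
rewrite h0 h1 h2 h3.
have -> : ((b * 4) %/ 4 = b)%N by lia.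
have -> : ((b * 4 + 1) %/ 4 = b)%N by lia.
have -> : ((b * 4 + 2) %/ 4 = b)%N by lia.
have -> : ((b * 4 + 3) %/ 4 = b)%N by lia.
have -> : ((b * 4) %% 4 = 0)%N by lia.
have -> : ((b * 4 + 1) %% 4 = 1)%N by lia.
have -> : ((b * 4 + 2) %% 4 = 2)%N by lia.
have -> : ((b * 4 + 3) %% 4 = 3)%N by lia.
by rewrite /Vv /= blk1.
Qed.

Lemma col_sum (G : zmodType) (t C : G) es m n' c (a : 'I_c) (j : 'I_n'.+2) :
  (m * 4 <= n'.+2)%N -> \sum_(i < n'.+2) entry (Arr t C es m a) i j = 0.
Proof.
move=> kn.
have hinj : injective (fun d : 'I_n'.+2 => j - d) by move=> x y /addrI/oppr_inj.
rewrite (reindex_inj hinj) /=.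
pose Gf (d : nat) := if (d < m * 4)%N then Vv t C es m a (d %/ 4) (j - d%:R) (d %% 4) else 0.
rewrite (eq_bigr (fun d : 'I_n'.+2 => Gf d)); last first.
  by move=> d _; rewrite /entry /Arr opprB addrC subrK /Gf natr_ord; case: ifP.
rewrite -(big_mkord xpredT Gf) (big_cat_nat (leq0n (m * 4)) kn) /=.
rewrite [X in _ + X]big_nat_cond [X in _ + X]big1 ?addr0; last first.
  by move=> d /andP [/andP [kd _] _]; rewrite /Gf ltnNge kd.
rewrite sum4 big_nat_cond big1 // => b /andP [/andP [_ bm] _].
rewrite /Gf.
have h0 : (b * 4 < m * 4)%N by lia.
have h1 : (b * 4 + 1 < m * 4)%N by lia.
have h2 : (b * 4 + 2 < m * 4)%N by lia.
have h3 : (b * 4 + 3 < m * 4)%N by lia.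
rewrite h0 h1 h2 h3.
have -> : ((b * 4) %/ 4 = b)%N by lia.
have -> : ((b * 4 + 1) %/ 4 = b)%N by lia.
have -> : ((b * 4 + 2) %/ 4 = b)%N by lia.
have -> : ((b * 4 + 3) %/ 4 = b)%N by lia.
have -> : ((b * 4) %% 4 = 0)%N by lia.
have -> : ((b * 4 + 1) %% 4 = 1)%N by lia.
have -> : ((b * 4 + 2) %% 4 = 2)%N by lia.
have -> : ((b * 4 + 3) %% 4 = 3)%N by lia.
rewrite /Vv /=.
have e1 : j - (b * 4 + 1)%:R + 1 = j - (b * 4)%:R.
  by rewrite (_ : (b * 4 + 1 = (b * 4).+1)%N) ?addn1 // mulrSr opprD addrA subrK.
have e3 : j - (b * 4 + 3)%:R + 1 = j - (b * 4 + 2)%:R.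
  by rewrite (_ : (b * 4 + 3 = (b * 4 + 2).+1)%N) ?addnS // mulrSr opprD addrA subrK.
by rewrite e1 e3 !addr0 blk0.
Qed.

Lemma val_sub (n' : nat) (i j : 'I_n'.+2) :
  nat_of_ord (j - i)%R = ((j + (n'.+2 - i)) %% n'.+2)%N.
Proof. by rewrite /= modnDmr. Qed.

Lemma kdiag (G : zmodType) (t C : G) es m n' c (a : 'I_c) :
  (m * 4 <= n'.+2)%N -> k_diagonal (m * 4) (@Arr G t C es m n' c a).
Proof.
move=> kn; exists ord0 => i j; rewrite Arr_some.
apply/idP/existsP => [h | [s]].
- exists (Ordinal h); rewrite /on_diag add0n /= -val_sub modn_small //.
  exact: leq_trans h kn.
- rewrite /on_diag add0n -val_sub (modn_small (leq_trans (ltn_ord s) kn)) => /eqP ->.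
  exact: ltn_ord.
Qed.

Lemma ppS (G : finZmodType) (es : seq G) (S : {set G}) m N c a b (x : 'I_N) :
  size es = (c * (m * N))%N -> (forall y, (y \in es) = (y \in S)) ->
  (a < c)%N -> (b < m)%N -> pp es m a b x \in S.
Proof.
move=> hsz hmem ac bm; rewrite -hmem; apply: mem_nth.
by rewrite hsz idx_lt.
Qed.

Lemma pp_inj (G : finZmodType) (es : seq G) m N c a b a' b' (x x' : 'I_N) :
  size es = (c * (m * N))%N -> uniq es ->
  (a < c)%N -> (b < m)%N -> (a' < c)%N -> (b' < m)%N ->
  pp es m a b x = pp es m a' b' x' -> [/\ a = a', b = b' & x = x'].
Proof.
move=> hsz hu ac bm a'c b'm /eqP.
rewrite /pp nth_uniq ?hsz ?idx_lt // => /eqP E.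
have N0 : (0 < N)%N by apply: leq_ltn_trans (ltn_ord x).
have [-> -> h] := mixed_inj N0 bm b'm (ltn_ord x) (ltn_ord x') E.
by split => //; apply/val_inj.
Qed.

Lemma pp_surj (G : finZmodType) (es : seq G) (S : {set G}) m N c p :
  (0 < m)%N -> (0 < N)%N ->
  size es = (c * (m * N))%N -> (forall y, (y \in es) = (y \in S)) -> p \in S ->
  exists a b (x : 'I_N), [/\ (a < c)%N, (b < m)%N & pp es m a b x = p].
Proof.
move=> m0 N0 hsz hmem pS.
have : (index p es < c * (m * N))%N by rewrite -hsz index_mem hmem.
case/(mixed_surj N0 m0) => a [b [x [ac bm xN E]]].
exists a, b, (Ordinal xN); split => //.
by rewrite /pp /= -E nth_index // hmem.
Qed.

Lemma cov_Fs (G : finZmodType) (t C : G) (S : {set G}) :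
  (forall g, [|| g \in S, t - g \in S, C - g \in S | g + t + C \in S]) ->
  forall g, exists p s, [/\ p \in S, (s < 4)%N & Fs t C p s = g].
Proof.
move=> cov g; case/or4P: (cov g) => h.
- by exists g, 0%N.
- by exists (t - g), 1%N; split => //=; rewrite opprB addrC subrK.
- by exists (C - g), 2%N; split => //=; rewrite opprB addrC subrK.
- by exists (g + t + C), 3%N; split => //=; rewrite (addrAC g t C) !addrK.
Qed.

Lemma once (G : finZmodType) (t C : G) (S : {set G}) (es : seq G) m n' c (g : G) :
  good t C S ->
  (forall g, [|| g \in S, t - g \in S, C - g \in S | g + t + C \in S]) ->
  (0 < m)%N -> (m * 4 <= n'.+2)%N ->
  size es = (c * (m * n'.+2))%N -> uniq es -> (forall y, (y \in es) = (y \in S)) ->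
  #|[set u : 'I_c * ('I_n'.+2 * 'I_n'.+2) |
      @Arr G t C es m n' c u.1 u.2.1 u.2.2 == Some g]| = 1%N.
Proof.
move=> gS cov m0 kn hsz hu hmem.
have [p [s [pS s4 Eg]]] := cov_Fs cov g.
have [a [b [x0 [ac bm Ep]]]] := pp_surj m0 (ltn0Sn _) hsz hmem pS.
pose a' : 'I_c := Ordinal ac.
pose i0 : 'I_n'.+2 := x0 - (odd s)%:R.
pose j0 : 'I_n'.+2 := i0 + (b * 4 + s)%:R.
have dlt : (b * 4 + s < m * 4)%N by lia.
have vd : nat_of_ord (j0 - i0) = (b * 4 + s)%N.
  rewrite /j0 (addrC i0) addrK Zp_nat /= modn_small //.
  exact: leq_trans dlt kn.
have H0 : @Arr G t C es m n' c a' i0 j0 = Some g.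
  rewrite /Arr vd dlt.
  have -> : ((b * 4 + s) %/ 4 = b)%N by lia.
  have -> : ((b * 4 + s) %% 4 = s)%N by lia.
  by rewrite /Vv /i0 subrK (_ : nat_of_ord a' = a) // Ep Eg.
rewrite (_ : [set u | _] = [set (a', (i0, j0))]) ?cards1 //.
apply/setP => [[a2 [i j]]]; rewrite !inE /=; apply/eqP/eqP => [|[-> -> ->] //].
rewrite /Arr; case: ifP => // dk [] E.
set d := nat_of_ord (j - i) in dk E.
rewrite /Vv -Eg -Ep in E.
have d4 : (d %% 4 < 4)%N by rewrite ltn_pmod.
have db : (d %/ 4 < m)%N by rewrite ltn_divLR.
have [ds ep] := Fs_inj gS (ppS _ hsz hmem (ltn_ord a2) db) (ppS x0 hsz hmem ac bm) d4 s4 E.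
have [ea eb ex] := pp_inj hsz hu (ltn_ord a2) db ac bm ep.
have ei : i = i0 by rewrite /i0 -ex -ds addrK.
have ea' : a2 = a' by apply/val_inj.
have dd : d = (b * 4 + s)%N by rewrite (divn_eq d 4) eb ds.
have ej : j = j0.
  have : nat_of_ord (j - i0) = nat_of_ord (j0 - i0) by rewrite vd -ei; exact: dd.
  by move/val_inj/addIr.
by rewrite ea' ei ej.
Qed.


Lemma main_aux (n k c : nat) :
  (4 <= k)%N -> (k <= n)%N -> (k %% 4 = 0)%N -> (1 <= c)%N ->
  forall G : finZmodType, in_classG G -> #|G| = (n * k * c)%N ->
  exists A : 'I_c -> pfarray G n, diagonal_MS k A.
Proof.
move=> k4 kn k0 c1 G hG cardG.
have km : k = (k %/ 4 * 4)%N by rewrite {1}(divn_eq k 4) k0 addn0.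
move: (k %/ 4)%N km => m km; subst k.
case: n kn cardG => [|[|n']] kn cardG; try by exfalso; lia.
have m0 : (0 < m)%N by lia.
have [e [f [e0 f0 ef ee ff]]] : exists e f : G,
    [/\ e != 0, f != 0, e != f, e + e = 0 & f + f = 0].
  case: hG => [hodd|/card_gt1P [x [y [xi yi xy]]]].
    by exfalso; move: hodd; rewrite cardG !oddM /= !andbF.
  move: xi yi; rewrite !inE => /andP [x0 /eqP xx] /andP [y0 /eqP yy].
  by exists x, y.
have [t [C [S [gS cov]]]] := exists_S e0 f0 ef ee ff.
have cS := card_S gS cov.
have hsz : size (enum S) = (c * (m * n'.+2))%N.
  rewrite -cardE; move: cS; rewrite cardG; nia.
have hu : uniq (enum S) := enum_uniq _.
have hmem : forall y, (y \in enum S) = (y \in S) by move=> y; rewrite mem_enum.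
exists (fun a => @Arr G t C (enum S) m n' c a).
split; [split | ] => //.
- move=> g; exact: once gS cov m0 kn hsz hu hmem.
- move=> a i; exact: row_card.
- move=> a j; exact: col_card.
- move=> a i; exact: row_sum.
- move=> a j; exact: col_sum.
- move=> a; exact: kdiag.
Qed.

Close Scope ring_scope.
Unset Implicit Arguments.

Theorem mainTheorem9 (n k c : nat) :
  (4 <= k)%N -> (k <= n)%N -> (k %% 4 = 0)%N -> (1 <= c)%N ->
  forall G : finZmodType, in_classG G -> #|G| = (n * k * c)%N ->
  exists A : 'I_c -> pfarray G n, diagonal_MS k A.
Proof. exact: main_aux. Qed.
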